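(* For every integer $n\ge 3$, the corona $C_n\odot 3K_1$ admits a signed product cordial labeling.
   Context: A graph $G$ is signed product cordial if there is a vertex labeling $\alpha: V(G)\to\{1,-1\}$ such that, with the induced edge labeling $\alpha^*(uv)=\alpha(u)\alpha(v)$, we have $|v_\alpha(-1)-v_\alpha(1)|\le 1$ and $|e_{\alpha^*}(-1)-e_{\alpha^*}(1)|\le 1$. Here $v_\alpha(x)$ is the number of vertices labeled $x$ and $e_{\alpha^*}(x)$ is the number of edges labeled $x$; such an $\alpha$ is called a signed product cordial labeling. The corona $G_1\odot G_2$ of graphs $G_1$ (with $n_1$ vertices) and $G_2$ is obtained by taking one copy of $G_1$ and $n_1$ copies of $G_2$, and joining the $i$-th vertex of $G_1$ by an edge to every vertex of the $i$-th copy of $G_2$. Here $C_n$ is the cycle on $n$ vertices and $3K_1$ is the edgeless graph on $3$ vertices. So $C_n\odot 3K_1$ is the cycle $u_1\cdots u_n$ with three pendant vertices $v_x,w_x,t_x$ attached to each $u_x$. *)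

(* Defs.v *)
From mathcomp Require Import all_boot.
Set Implicit Arguments. Unset Strict Implicit. Unset Printing Implicit Defensive.

Record sgraph (V : finType) := SGraph {
  adj : rel V;
  adj_sym : symmetric adj;
  adj_irr : irreflexive adj }.

Definition edges (V : finType) (G : sgraph V) : {set {set V}} :=
  [set [set u; v] | u in V, v in V & adj G u v].

(* Vertex labelings with values in {1,-1}, encoded as bool: true = 1, false = -1.
   The induced edge label alpha(u)alpha(v) is 1 iff alpha u == alpha v. *)
Definition edge_label (V : finType) (alpha : V -> bool) (e : {set V}) : bool :=
  [forall u in e, forall v in e, alpha u == alpha v].

Definition nat_dist (a b : nat) : nat := (a - b) + (b - a).

Definition signed_product_cordial_labeling (V : finType) (G : sgraph V)
    (alpha : V -> bool) : Prop :=
  nat_dist #|[set x | alpha x]| #|[set x | ~~ alpha x]| <= 1 /\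
  nat_dist #|[set e in edges G | edge_label alpha e]|
           #|[set e in edges G | ~~ edge_label alpha e]| <= 1.

Definition signed_product_cordial (V : finType) (G : sgraph V) : Prop :=
  exists alpha : V -> bool, signed_product_cordial_labeling G alpha.

(* The corona C_n (.) 3K_1.  Vertex (x, 0) is the cycle vertex u_x; vertices
   (x, 1), (x, 2), (x, 3) are the pendants v_x, w_x, t_x attached to u_x. *)
Definition corona_adj (n : nat) : rel ('I_n * 'I_4) :=
  fun p q =>
    [|| (p.2 == 0 :> nat) && (q.2 == 0 :> nat) &&
          ((q.1 == (p.1).+1 %% n :> nat) || (p.1 == (q.1).+1 %% n :> nat)),
        (p.1 == q.1) && (p.2 == 0 :> nat) && (q.2 != 0 :> nat)
      | (p.1 == q.1) && (q.2 == 0 :> nat) && (p.2 != 0 :> nat)].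

Lemma corona_adj_sym (m : nat) : symmetric (@corona_adj m).
Proof.
move=> [x i] [y j]; rewrite /corona_adj /=.
rewrite (eq_sym y x).
by case: (x == y); case: (i == 0 :> nat); case: (j == 0 :> nat);
   case: (y == x.+1 %% m :> nat); case: (x == y.+1 %% m :> nat).
Qed.

Lemma corona_adj_irr (m : nat) : 3 <= m -> irreflexive (@corona_adj m).
Proof.
move=> m3 [x i]; rewrite /corona_adj /= eqxx /= andbN /= orbF.
have hx : x < m by [].
have -> : (x == x.+1 %% m :> nat) = false.
  case: (ltnP x.+1 m) => h; first by rewrite modn_small // ltn_eqF.
  have e : x.+1 = m by apply/eqP; rewrite eqn_leq h hx.
  rewrite e modnn; apply/negbTE; rewrite -lt0n.
  have m3' : 2 < x.+1 by rewrite e.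
  by move: m3'; rewrite ltnS; apply: leq_trans.
by rewrite andbF.
Qed.

Definition corona_C_3K1 (n : nat) (n3 : 3 <= n) : sgraph ('I_n * 'I_4)%type :=
  @SGraph _ (@corona_adj n) (@corona_adj_sym n) (@corona_adj_irr n n3).

(* Main.v *)
Require Import Defs.
From mathcomp Require Import all_boot.
From mathcomp Require Import zify.

Lemma c4 : #|[set j : 'I_4 | j <= 1]| = 2.
Proof.
have -> : [set j : 'I_4 | j <= 1] = [set (@Ordinal 4 0 isT); @Ordinal 4 1 isT].
  by apply/setP => -[[|[|[|[|k]]]] Hk]; rewrite !inE //.
by rewrite cards2.
Qed.

Lemma c4' : #|[set j : 'I_4 | ~~ (j <= 1)]| = 2.
Proof.
have -> : [set j : 'I_4 | ~~ (j <= 1)] = [set (@Ordinal 4 2 isT); @Ordinal 4 3 isT].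
  by apply/setP => -[[|[|[|[|k]]]] Hk]; rewrite !inE //.
by rewrite cards2.
Qed.

Lemma cardP (n : nat) (P : pred 'I_4) :
  #|[set p : 'I_n * 'I_4 | P p.2]| = n * #|[set j | P j]|.
Proof.
have -> : [set p : 'I_n * 'I_4 | P p.2] = setX [set: 'I_n] [set j | P j].
  by apply/setP => -[x j]; rewrite !inE.
by rewrite cardsX cardsT card_ord.
Qed.

Lemma edge_label2 (V : finType) (alpha : V -> bool) (u v : V) :
  edge_label alpha [set u; v] = (alpha u == alpha v).
Proof.
rewrite /edge_label; apply/forall_inP/eqP.
- move=> H; have /forall_inP/(_ v (set22 u v)) := H u (set21 u v).
  by move/eqP.
- move=> E w; rewrite in_set2 => /orP[]/eqP->; apply/forall_inP => z;
  rewrite in_set2 => /orP[]/eqP-> //; by rewrite E.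
Qed.

Definition nxt (n : nat) (n0 : 0 < n) (x : 'I_n) : 'I_n := Ordinal (ltn_pmod x.+1 n0).
Arguments nxt {n}.

Definition gg (n : nat) (n0 : 0 < n) (p : 'I_n * 'I_4) : {set 'I_n * 'I_4} :=
  if p.2 == ord0 then [set (p.1, ord0); (nxt n0 p.1, ord0)]
  else [set (p.1, ord0); p].
Arguments gg {n}.

Definition alph (n : nat) (p : 'I_n * 'I_4) : bool := p.2 <= 1.
Arguments alph {n}.

Lemma card_alph n : #|[set p : 'I_n * 'I_4 | alph p]| = n * 2.
Proof. by rewrite -[in RHS]c4 -(cardP n (fun j : 'I_4 => j <= 1)). Qed.

Lemma card_nalph n : #|[set p : 'I_n * 'I_4 | ~~ alph p]| = n * 2.
Proof. by rewrite -[in RHS]c4' -(cardP n (fun j : 'I_4 => ~~ (j <= 1))). Qed.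

Lemma label_gg n (n0 : 0 < n) p : edge_label (@alph n) (gg n0 p) = alph p.
Proof.
rewrite /gg; case: ifP => H; rewrite edge_label2 /alph /=.
  by move/eqP: H => ->.
by case: (p.2 <= 1).
Qed.

Lemma gg_inj n (n3 : 3 <= n) (n0 : 0 < n) : injective (gg n0).
Proof.
move=> [x i] [y j]; rewrite /gg /=.
case: (eqVneq i ord0) => [->|Hi]; case: (eqVneq j ord0) => [->|Hj] E.
- have h1 : (x, ord0) \in [set (y, (ord0 : 'I_4)); (nxt n0 y, ord0)].
    by rewrite -E set21.
  have h2 : (y, ord0) \in [set (x, (ord0 : 'I_4)); (nxt n0 x, ord0)].
    by rewrite E set21.
  move: h1 h2; rewrite !in_set2 !xpair_eqE !eqxx !andbT.
  case: (eqVneq x y) => [-> //|nxy] /= /eqP/(congr1 val) h1 /eqP/(congr1 val) h2.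
  exfalso; move: h1 h2 => /= h1 h2.
  have hx := ltn_ord x; have hy := ltn_ord y.
  have : (x : nat) != y by [].
  move=> nxy'; move: h1 h2 hx hy nxy'; move: (x : nat) (y : nat) => a b h1 h2 ha hb0 nab.
  case: (ltnP b.+1 n) => hb.
    move: h2; rewrite h1 (modn_small hb).
    case: (ltnP b.+2 n) => hb2; first by rewrite (modn_small hb2); lia.
    have -> : b.+2 = n by lia.
    rewrite modnn; lia.
  have eb : b.+1 = n by lia.
  move: h2; rewrite h1 eb modnn modn_small; lia.
- have : (y, j) \in [set (x, (ord0 : 'I_4)); (nxt n0 x, ord0)] by rewrite E set22.
  by rewrite !in_set2 !xpair_eqE (negbTE Hj) !andbF.
- have : (x, i) \in [set (y, (ord0 : 'I_4)); (nxt n0 y, ord0)] by rewrite -E set22.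
  by rewrite !in_set2 !xpair_eqE (negbTE Hi) !andbF.
- have : (x, i) \in [set (y, (ord0 : 'I_4)); (y, j)] by rewrite -E set22.
  by rewrite !in_set2 !xpair_eqE (negbTE Hi) andbF /= => /andP[/eqP-> /eqP->].
Qed.

Lemma edges_gg n (n3 : 3 <= n) (n0 : 0 < n) :
  edges (corona_C_3K1 n3) = gg n0 @: setT.
Proof.
apply/setP => e; apply/imset2P/imsetP.
- move=> [u v _]; rewrite inE /= /corona_adj => H ->.
  case: u v H => x i [y j] /=.
  case/or3P => [/andP[/andP[hi hj]] /orP[] h | /andP[/andP[hxy hi] hj] | /andP[/andP[hxy hj] hi]].
  + exists (x, ord0) => //; rewrite /gg /=.
    congr [set _; _]; first by congr pair; apply/val_inj/eqP.
    by congr pair; apply/val_inj/eqP.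
  + exists (y, ord0) => //; rewrite /gg /= setUC.
    congr [set _; _]; first by congr pair; apply/val_inj/eqP.
    by congr pair; apply/val_inj/eqP.
  + exists (y, j) => //; rewrite /gg /=.
    have -> : (j == ord0) = false by apply/negbTE.
    by move/eqP: hxy => ->; congr [set _; _]; congr pair; apply/val_inj/eqP.
  + exists (x, i) => //; rewrite /gg /= setUC.
    have -> : (i == ord0) = false by apply/negbTE.
    by move/eqP: hxy => ->; congr [set _; _]; congr pair; apply/val_inj/eqP.
- move=> [[x i] _ ->]; rewrite /gg /=.
  case: (eqVneq i ord0) => Hi.
  + exists (x, ord0) (nxt n0 x, ord0) => //.
    by rewrite inE /= /corona_adj /= eqxx.
  + exists (x, ord0) (x, i) => //.
    by rewrite inE /= /corona_adj /= eqxx /= Hi orbT.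
Qed.

Theorem theorem2p4 (n : nat) (n3 : 3 <= n) :
  signed_product_cordial (corona_C_3K1 n3).
Proof.
have n0 : 0 < n by apply: leq_trans _ n3.
exists (@alph n); split.
  by rewrite card_alph card_nalph /nat_dist subnn.
have E1 : [set e in edges (corona_C_3K1 n3) | edge_label (@alph n) e]
          = gg n0 @: [set p | alph p].
  apply/setP => e; rewrite inE (edges_gg n n3 n0); apply/andP/imsetP.
  - by move=> [/imsetP[p _ ->] L]; exists p => //; rewrite inE -label_gg.
  - by move=> [p Hp ->]; split; [apply: imset_f | rewrite label_gg; rewrite inE in Hp].
have E2 : [set e in edges (corona_C_3K1 n3) | ~~ edge_label (@alph n) e]
          = gg n0 @: [set p | ~~ alph p].
  apply/setP => e; rewrite inE (edges_gg n n3 n0); apply/andP/imsetP.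
  - by move=> [/imsetP[p _ ->] L]; exists p => //; rewrite inE -label_gg.
  - by move=> [p Hp ->]; split; [apply: imset_f | rewrite label_gg; rewrite inE in Hp].
rewrite E1 E2 !card_imset; try exact: (gg_inj n n3 n0).
by rewrite card_alph card_nalph /nat_dist subnn.
Qed.
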